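(* Let $G$ be a finite, connected, simple, bridgeless, triangle-free cubic graph, let $\Lambda$ be a valid labeling of $\mathfrak{L}_2(G)$ and let $\mathbb{X}\in\mathcal{X}$. Then: (a) if $\mathbb{X}$ contains an open edge of $\gamma_1$ and an open edge of $\gamma_2$ for two distinct cycles $\gamma_1,\gamma_2\in\Gamma_\Lambda$, then $\mathbb{X}$ is a Type B self-intersection with respect to $\mathcal{F}_{\mathbb{X}}(\Lambda)$; (b) if $\mathbb{X}$ is a Type B self-intersection with respect to $\Lambda$, then with respect to $\mathcal{F}_{\mathbb{X}}(\Lambda)$ the two open edges of $\mathbb{X}$ belong to two distinct (hence adjacent) cycles of $\Gamma_{\mathcal{F}_{\mathbb{X}}(\Lambda)}$; (c) if $\mathbb{X}$ is a Type A self-intersection with respect to $\Lambda$, then $\mathbb{X}$ is a Type A self-intersection with respect to $\mathcal{F}_{\mathbb{X}}(\Lambda)$.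
   Context: $\mathcal{L}(H)$ is the line graph of $H$. Let $\mathcal{T}$ be the set of triangles of $\mathcal{L}(\mathcal{L}(G))$ formed by the three edges of a triangle of $\mathcal{L}(G)$. $\mathfrak{L}_2(G)$ has the vertex set of $\mathcal{L}(\mathcal{L}(G))$ and the edges of $\mathcal{L}(\mathcal{L}(G))$ not in any triangle of $\mathcal{T}$. For each edge $e$ of $G$, the reduced clique $\mathbb{X}_e$ is the subgraph of $\mathfrak{L}_2(G)$ on the four edges of $\mathcal{L}(G)$ incident to $e$, with all edges of $\mathfrak{L}_2(G)$ among them; it is a 4-cycle. $\mathcal{X}$ is the set of reduced cliques. A labeling $\Lambda$ gives each edge of $\mathfrak{L}_2(G)$ a label in $\{0,1\}$ ($1$ = open, $0$ = closed); it is valid if in every reduced clique each vertex is incident to two edges of that clique with different labels (so the open edges of each $\mathbb{X}$ form a perfect matching of the 4-cycle $\mathbb{X}$). $\Gamma_\Lambda$ is the set of connected components (cycles) of the subgraph formed by open edges. The label inversion $\mathcal{F}_{\mathbb{X}}(\Lambda)$ is the valid labeling obtained from $\Lambda$ by replacing $\lambda_f$ by $1-\lambda_f$ for every edge $f$ of $\mathbb{X}$ and leaving all other labels unchanged. $\mathbb{X}$ is a self-intersection of $\gamma\in\Gamma_\Lambda$ if both open edges of $\mathbb{X}$ lie on $\gamma$. Write $\mathbb{X}$ as the 4-cycle $(x_1,x_2,x_3,x_4)$ with open edges $x_1x_2$ and $x_3x_4$; deleting these two edges from $\gamma$ leaves two vertex-disjoint paths with endpoint set $\{x_1,x_2,x_3,x_4\}$.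 The self-intersection is of Type B if these paths connect $x_2$ with $x_3$ and $x_4$ with $x_1$, and of Type A if they connect $x_1$ with $x_3$ and $x_2$ with $x_4$. *)

(* Defs.v *)
From mathcomp Require Import all_boot.
Set Implicit Arguments. Unset Strict Implicit. Unset Printing Implicit Defensive.

Section Defs.
Variable V : finType.
Variable adj : rel V.

Definition simple_graph : Prop := symmetric adj /\ irreflexive adj.
Definition cubic : Prop := forall v : V, #|[set u | adj v u]| = 3.
Definition connected_graph : Prop := forall u v : V, connect adj u v.
Definition bridgeless : Prop :=
  forall u v : V, adj u v ->
    connect (fun x y => adj x y && ([set x; y] != [set u; v])) u v.
Definition triangle_free : Prop :=
  forall u v w : V, adj u v -> adj v w -> ~~ adj w u.

(** Edges of G = vertices of L(G). *)
Definition gedge (e : {set V}) : bool :=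
  [exists u, exists v, adj u v && (e == [set u; v])].
Definition lg_adj (e f : {set V}) : bool :=
  [&& gedge e, gedge f, e != f & ~~ [disjoint e & f]].
(** Vertices of L(L(G)) = edges of L(G), as unordered pairs {e,f}. *)
Definition llg_vertex (x : {set {set V}}) : bool :=
  [exists e, exists f, lg_adj e f && (x == [set e; f])].
Definition llg_adj (x y : {set {set V}}) : bool :=
  [&& llg_vertex x, llg_vertex y, x != y & ~~ [disjoint x & y]].
Definition lg_triangle (t : {set {set V}}) : bool :=
  (#|t| == 3) && [forall e in t, forall f in t, (e != f) ==> lg_adj e f].
(** The L(L(G))-edge xy lies in a triangle of T (the triangle of L(L(G))
    whose vertices are the three edges of a triangle t of L(G)). *)
Definition in_T (x y : {set {set V}}) : bool :=
  [exists t, [&& lg_triangle t, x \subset t & y \subset t]].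
Definition l2_adj (x y : {set {set V}}) : bool := llg_adj x y && ~~ in_T x y.

Definition rc_vertex (e : {set V}) (x : {set {set V}}) : bool :=
  llg_vertex x && (e \in x).
Definition rc_edge (e : {set V}) (x y : {set {set V}}) : bool :=
  [&& l2_adj x y, e \in x & e \in y].
Definition in_rc_edge (e : {set V}) (s : {set {set {set V}}}) : bool :=
  [exists x, exists y, rc_edge e x y && (s == [set x; y])].

(** A labeling assigns a label (true = open = 1, false = closed = 0) to each
    unordered edge {x,y} of L_2(G); values on non-edges are irrelevant. *)
Definition labeling := {set {set {set V}}} -> bool.

Definition valid (L : labeling) : Prop :=
  forall e, gedge e -> forall x, rc_vertex e x ->
    exists y z, [/\ rc_edge e x y, rc_edge e x z & L [set x; y] != L [set x; z]].

(** open edges; the cycles of Gamma_L are the connected components of this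
    relation. An open edge xy lies on the cycle of x. *)
Definition open_adj (L : labeling) (x y : {set {set V}}) : bool :=
  l2_adj x y && L [set x; y].

Definition flip (L : labeling) (e : {set V}) : labeling :=
  fun s => if in_rc_edge e s then ~~ L s else L s.

Definition rc_config (L : labeling) (e : {set V}) (x1 x2 x3 x4 : {set {set V}}) : Prop :=
  [/\ uniq [:: x1; x2; x3; x4],
      [/\ rc_edge e x1 x2, rc_edge e x2 x3, rc_edge e x3 x4 & rc_edge e x4 x1],
      L [set x1; x2] && L [set x3; x4] &
      ~~ L [set x2; x3] && ~~ L [set x4; x1]].

Definition open_minus (L : labeling) (x1 x2 x3 x4 : {set {set V}}) (u v : {set {set V}}) : bool :=
  [&& open_adj L u v, [set u; v] != [set x1; x2] & [set u; v] != [set x3; x4]].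

(** X_e is a self-intersection: both open edges lie on the same cycle. *)
Definition self_intersection (L : labeling) (e : {set V}) : Prop :=
  exists x1 x2 x3 x4, rc_config L e x1 x2 x3 x4 /\ connect (open_adj L) x1 x3.

Definition typeB (L : labeling) (e : {set V}) : Prop :=
  exists x1 x2 x3 x4, [/\ rc_config L e x1 x2 x3 x4, connect (open_adj L) x1 x3,
     connect (open_minus L x1 x2 x3 x4) x2 x3 &
     connect (open_minus L x1 x2 x3 x4) x4 x1].

Definition typeA (L : labeling) (e : {set V}) : Prop :=
  exists x1 x2 x3 x4, [/\ rc_config L e x1 x2 x3 x4, connect (open_adj L) x1 x3,
     connect (open_minus L x1 x2 x3 x4) x1 x3 &
     connect (open_minus L x1 x2 x3 x4) x2 x4].

End Defs.

(* Main.v *)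
Require Import Defs.
From mathcomp Require Import all_boot.
Set Implicit Arguments. Unset Strict Implicit. Unset Printing Implicit Defensive.

Lemma set2_eqE (U : finType) (a b c d : U) :
  [set a; b] = [set c; d] -> (a = c /\ b = d) \/ (a = d /\ b = c).
Proof.
move=> H.
have ha : a \in [set c; d] by rewrite -H set21.
have hb : b \in [set c; d] by rewrite -H set22.
have hc : c \in [set a; b] by rewrite H set21.
have hd : d \in [set a; b] by rewrite H set22.
move: ha hb hc hd; rewrite !inE.
by do 4 (case/orP=> /eqP ?); subst; auto.
Qed.

Section Gen.
Variable T : finType.
Variable r : rel T.
Hypothesis rsym : forall u v, r u v -> r v u.
Hypothesis rdeg2 : forall v p n w, r v p -> r v n -> r v w -> p != n -> w = p \/ w = n.

Lemma interior_closed x q z w : path r x q -> uniq (x :: q) -> z \in q ->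
  z != last x q -> r z w -> w \in x :: q.
Proof.
elim: q x => [|y q IH] x //= /andP[rxy pq] /andP[xnq uq].
rewrite inE => /orP[/eqP ->|zq] zl rzw.
- case: q IH pq uq xnq zl => [|y2 q] IH /=; first by rewrite eqxx.
  move=> /andP[ryy2 _] _; rewrite !inE negb_or => /andP[_ /norP[xy2 _]] _.
  have [->|->] := rdeg2 (rsym rxy) ryy2 rzw xy2; by rewrite eqxx ?orbT.
- by rewrite inE (IH y pq uq zq zl rzw) orbT.
Qed.

Lemma interior_two x q z : path r x q -> uniq (x :: q) -> z \in q ->
  z != last x q -> exists p n, [/\ p != n, r z p & r z n].
Proof.
elim: q x => [|y q IH] x //= /andP[rxy pq] /andP[xnq uq].
rewrite inE => /orP[/eqP ->|zq] zl.
- case: q IH pq uq xnq zl => [|y2 q] IH /=; first by rewrite eqxx.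
  move=> /andP[ryy2 _] _; rewrite !inE negb_or => /andP[_ /norP[xy2 _]] _.
  by exists x, y2; split => //; apply: rsym.
- exact: (IH y pq uq zq zl).
Qed.



Hypothesis rirr : forall u, ~~ r u u.
Hypothesis rge2 : forall v w, r v w -> exists p n, [/\ p != n, r v p & r v n].

Lemma cycle_edge a b : r a b ->
  connect (fun u v => r u v && ([set u; v] != [set a; b])) b a.
Proof.
move=> rab; set R := (fun u v => _).
apply/negPn/negP => nc.
have Rr : subrel R r by move=> u v /andP[].
have pRr : forall x q, path R x q -> path r x q by move=> x q; apply: sub_path.
have ab : a != b by apply: contraTneq rab => ->; rewrite rirr.
have key : forall n, exists q, [/\ size q = n, path R b q & uniq (b :: q)].
  elim=> [|n [q [sq pq uq]]]; first by exists [::].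
  have reach : forall y, y \in b :: q -> connect R b y by move=> y; apply: path_connect.
  have nota : a \notin b :: q by apply: contra nc; apply: reach.
  move: sq pq uq nota reach; case/lastP: q => [|q0 z].
  - move=> <- _ _ _ _.
    have [p [m [pm rbp rbm]]] := rge2 (rsym rab).
    have [m' [rbm' m'a]] : exists m', r b m' /\ m' != a.
      case: (eqVneq p a) => [pa|pa]; last by exists p.
      by exists m; split => //; rewrite -pa eq_sym.
    exists [:: m']; split => //=; rewrite andbT.
      rewrite /R rbm' /=; apply/negP => /eqP /set2_eqE [[ba _]|[_ ma]].
        by rewrite ba eqxx in ab.
      by rewrite ma eqxx in m'a.
    by rewrite inE; apply: contraTneq rbm' => ->; rewrite rirr.
  - rewrite size_rcons => sq pq uq nota reach.
    move: (pq); rewrite rcons_path => /andP[pq0 Rpz]; set p := last b q0 in Rpz.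
    have [p1 [n1 [pn rz1 rz2]]] := rge2 (rsym (Rr _ _ Rpz)).
    have [m [rzm mp]] : exists m, r z m /\ m != p.
      case: (eqVneq p1 p) => [e|e]; last by exists p1.
      by exists n1; split => //; rewrite -e eq_sym.
    have zl : z \in b :: rcons q0 z by rewrite inE mem_rcons inE eqxx orbT.
    have za : z != a by apply: contraNneq nota => <-.
    move: (uq); rewrite /= rcons_uniq mem_rcons inE negb_or => /andP[/andP[bz bq0] /andP[zq0 uq0]].
    have Rzm : R z m.
      rewrite /R rzm /=; apply/negP => /eqP /set2_eqE [[e _]|[e _]].
        by rewrite e eqxx in za.
      by rewrite e eqxx in bz.
    have ma : m != a.
      apply: contra nc => /eqP ma; apply: connect_trans (reach _ zl) _.
      by apply: connect1; rewrite -ma.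
    have mnot : m \notin b :: rcons q0 z.
      rewrite inE mem_rcons inE negb_or negb_or; apply/andP; split; last (apply/andP; split).
      - apply/negP => /eqP mb.
        case: q0 @p sq pq uq reach zl zq0 bq0 uq0 pq0 Rpz mp nota => [|y q0] p; first by rewrite /p mb eqxx.
        move=> sq pq uq reach zl zq0 bq0 uq0 /= /andP[Rby _] _ _ nota.
        have rba : r b a by apply: rsym.
        have rbz : r b z by rewrite -mb; apply: rsym.
        have yz : y != z by apply: contraNneq zq0 => <-; rewrite inE eqxx.
        have [e|e] := rdeg2 (Rr _ _ Rby) rbz rba yz.
          by move: nota; rewrite e !inE mem_rcons !inE eqxx !orbT.
        by rewrite e eqxx in za.
      - by apply: contraTneq rzm => ->; rewrite rirr.
      - apply/negP => mq0.
        have uq' : uniq (b :: q0) by rewrite /= bq0 uq0.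
        have := interior_closed (pRr _ _ pq0) uq' mq0 mp (rsym rzm).
        by rewrite inE (negbTE zq0) orbF => /eqP zb; rewrite zb eqxx in bz.
    exists (rcons (rcons q0 z) m); split.
    + by rewrite !size_rcons sq.
    + by rewrite rcons_path pq last_rcons Rzm.
    + change (uniq (b :: rcons (rcons q0 z) m)); by rewrite -rcons_cons rcons_uniq mnot uq.
have [q [sq _ uq]] := key #|T|.
have := max_card (mem (b :: q)).
by rewrite (card_uniqP uq) /= sq ltnn.
Qed.

End Gen.

Section G.
Variable V : finType.
Variable adj : rel V.
Hypothesis Hsym : symmetric adj.
Hypothesis Hirr : irreflexive adj.
Hypothesis Hcubic : cubic adj.
Variable L : labeling V.
Hypothesis HL : valid adj L.

Lemma ndisjP (U : finType) (A B : {set U}) :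
  ~~ [disjoint A & B] -> exists x, x \in A /\ x \in B.
Proof. by rewrite -setI_eq0 => /set0Pn [x]; rewrite inE => /andP[]; exists x. Qed.

Lemma ndisjI (U : finType) (A B : {set U}) x : x \in A -> x \in B -> ~~ [disjoint A & B].
Proof. by move=> xa xb; rewrite -setI_eq0; apply/set0Pn; exists x; rewrite inE xa xb. Qed.

Lemma gedgeP e : gedge adj e -> exists u v, adj u v /\ e = [set u; v].
Proof. by move=> /existsP[u /existsP[v /andP[a /eqP->]]]; exists u, v. Qed.

Lemma lg_adjP e f : lg_adj adj e f ->
  [/\ gedge adj e, gedge adj f, e != f & exists w, w \in e /\ w \in f].
Proof. by case/and4P => ge gf ef /ndisjP. Qed.

Lemma lg_adj_sym e f : lg_adj adj e f = lg_adj adj f e.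
Proof. by rewrite /lg_adj andbCA [e == f]eq_sym disjoint_sym. Qed.

Lemma llg_vertexP x : llg_vertex adj x -> exists f g, lg_adj adj f g /\ x = [set f; g].
Proof. by move=> /existsP[f /existsP[g /andP[a /eqP->]]]; exists f, g. Qed.

Lemma llg_adj_sym x y : llg_adj adj x y = llg_adj adj y x.
Proof. by rewrite /llg_adj andbCA [x == y]eq_sym disjoint_sym. Qed.

Lemma in_T_sym x y : in_T adj x y = in_T adj y x.
Proof. by apply: eq_existsb => t; rewrite [X in _ && X]andbC. Qed.

Lemma l2_adj_sym x y : l2_adj adj x y = l2_adj adj y x.
Proof. by rewrite /l2_adj llg_adj_sym in_T_sym. Qed.

Lemma rc_edge_sym e x y : rc_edge adj e x y = rc_edge adj e y x.
Proof. by rewrite /rc_edge l2_adj_sym [X in _ && X]andbC. Qed.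

Lemma l2_adjP x y : l2_adj adj x y ->
  [/\ llg_vertex adj x, llg_vertex adj y, x != y, ~~ in_T adj x y & exists h, h \in x /\ h \in y].
Proof. by case/andP => /and4P[vx vy xy /ndisjP] ?. Qed.

Lemma rc_edgeP e x y : rc_edge adj e x y ->
  [/\ x != y, llg_vertex adj x, llg_vertex adj y, e \in x & e \in y].
Proof. by case/and3P => l ex ey; case/l2_adjP: (l). Qed.

Lemma rc_dec e y : llg_vertex adj y -> e \in y -> exists h, y = [set e; h] /\ lg_adj adj e h.
Proof.
case/llg_vertexP => f [g [fg ->]]; rewrite !inE => /orP[/eqP->|/eqP->]; first by exists g.
by exists f; rewrite setUC lg_adj_sym.
Qed.

Lemma gedge_in x h : llg_vertex adj x -> h \in x -> gedge adj h.
Proof.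
case/llg_vertexP => f [g [/lg_adjP[gf gg _ _] ->]]; rewrite !inE.
by case/orP=> /eqP->.
Qed.

Lemma card3 (U : finType) (a b c : U) : a != b -> a != c -> b != c -> #|[set a; b; c]| = 3.
Proof.
move=> ab ac bc.
have -> : [set a; b; c] = a |: (b |: [set c]).
  by apply/setP => x; rewrite !inE orbA.
by rewrite !cardsU1 !inE cards1 negb_or ab ac bc.
Qed.

Lemma set2_in (U : finType) (a b c d : U) : c != d -> c \in [set a; b] -> d \in [set a; b] ->
  [set a; b] = [set c; d].
Proof.
move=> cd; rewrite !inE => /orP[]/eqP ? /orP[]/eqP ?; subst; rewrite ?eqxx // in cd *.
by rewrite setUC.
Qed.



Definition side (e : {set V}) (w : V) (y : {set {set V}}) := exists h, [/\ y = [set e; h], lg_adj adj e h & w \in h].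

Lemma side_cover (e : {set V}) (s s' : V) (y : {set {set V}}) : e = [set s; s'] -> llg_vertex adj y -> e \in y ->
  side e s y \/ side e s' y.
Proof.
move=> E vy ey; have [h [-> eh]] := rc_dec vy ey.
have [_ _ _ [w [we wh]]] := lg_adjP eh.
move: we; rewrite E !inE => /orP[]/eqP wE; [left|right]; exists h; split => //; by rewrite -?E -?wE.
Qed.

Lemma side_adj (e : {set V}) (w : V) (y z : {set {set V}}) : w \in e -> rc_edge adj e y z -> side e w y -> side e w z -> False.
Proof.
move=> we R; have [yz _ _ _ _] := rc_edgeP R; case/and3P: R => l _ _.
move=> [h1 [E1 eh1 wh1]] [h2 [E2 eh2 wh2]].
case/l2_adjP: l => _ _ _ /negP nT _; apply: nT.
have [g1 g1' e1 _] := lg_adjP eh1.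
have [g2 g2' e2 _] := lg_adjP eh2.
have h12 : h1 != h2 by apply: contraNneq yz => h12; rewrite E1 E2 h12.
apply/existsP; exists [set e; h1; h2]; apply/and3P; split.
- apply/andP; split; first by rewrite card3.
  have l12 : lg_adj adj h1 h2 by rewrite /lg_adj g1' g2' h12 (ndisjI wh1 wh2).
  apply/forall_inP => x; rewrite !inE => /orP[/orP[]|]/eqP->;
  apply/forall_inP => y0; rewrite !inE => /orP[/orP[]|]/eqP-> /=;
  rewrite ?eqxx //=; apply/implyP => _; rewrite // lg_adj_sym //.
- by rewrite E1; apply/subsetP => x; rewrite !inE => /orP[]->; rewrite ?orbT.
- by rewrite E2; apply/subsetP => x; rewrite !inE => /orP[]->; rewrite ?orbT.
Qed.

Lemma get_s (e : {set V}) (w t : V) (y : {set {set V}}) : e = [set w; t] -> side e w y ->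
  exists s, [/\ adj w s, s != t & y = [set e; [set w; s]]].
Proof.
move=> E [h [-> eh wh]].
have [_ gh eh' _] := lg_adjP eh.
have [p [q [pq hE]]] := gedgeP gh.
have [s [ws hs]] : exists s, adj w s /\ h = [set w; s].
  move: wh; rewrite hE !inE => /orP[]/eqP->; first by exists q.
  by exists p; rewrite setUC Hsym.
exists s; split => //; last by rewrite hs.
by apply: contraNneq eh' => st; rewrite E hs st.
Qed.

Lemma side_le2 (e : {set V}) (w t : V) (y1 y2 y3 : {set {set V}}) : e = [set w; t] -> adj w t ->
  side e w y1 -> side e w y2 -> side e w y3 ->
  y1 != y2 -> y1 != y3 -> y2 != y3 -> False.
Proof.
move=> E wt S1 S2 S3 n12 n13 n23.
have [s1 [a1 t1 ?]] := get_s E S1; subst y1.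
have [s2 [a2 t2 ?]] := get_s E S2; subst y2.
have [s3 [a3 t3 ?]] := get_s E S3; subst y3.
have m12 : s1 != s2 by apply: contraNneq n12 => ->.
have m13 : s1 != s3 by apply: contraNneq n13 => ->.
have m23 : s2 != s3 by apply: contraNneq n23 => ->.
have sub : [set s1; s2; s3] \subset [set s | adj w s] :\ t.
  by apply/subsetP => x; rewrite !inE => /orP[/orP[]|]/eqP->; rewrite ?a1 ?a2 ?a3 ?t1 ?t2 ?t3.
have := subset_leq_card sub; rewrite card3 //.
have := cardsD1 t [set s | adj w s]; rewrite Hcubic inE wt /= add1n => -[<-].
by [].
Qed.

Lemma other_side (e : {set V}) (s s' : V) (x y : {set {set V}}) : e = [set s; s'] -> rc_edge adj e x y -> side e s x -> side e s' y.
Proof.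
move=> E r sx; have [_ _ vy _ ey] := rc_edgeP r.
case: (side_cover E vy ey) => // sy.
by case: (side_adj _ r sx sy); rewrite E !inE eqxx.
Qed.

Lemma sides e : gedge adj e -> forall x, llg_vertex adj x -> e \in x ->
  exists s s', [/\ e = [set s; s'], e = [set s'; s], adj s s', adj s' s & side e s x].
Proof.
move=> /gedgeP[u [t [ut E]]] x vx ex.
have ut' : adj t u by rewrite Hsym.
case: (side_cover E vx ex) => S; [exists u, t | exists t, u]; split => //; by rewrite E setUC.
Qed.

Lemma rc_nb2 e x y z w : gedge adj e -> rc_edge adj e x y -> rc_edge adj e x z ->
  rc_edge adj e x w -> y != z -> w = y \/ w = z.
Proof.
move=> ge rxy rxz rxw yz; have [_ vx _ ex _] := rc_edgeP rxy.
have [s [s' [E E' ss ss' sx]]] := sides ge vx ex.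
have sy := other_side E rxy sx; have sz := other_side E rxz sx; have sw := other_side E rxw sx.
case: (eqVneq w y) => [|wy]; first by left.
case: (eqVneq w z) => [|wz]; first by right.
by case: (side_le2 E' ss' sy sz sw yz); rewrite eq_sym.
Qed.

Notation T2 := {set {set V}}.

Lemma open_adj_sym (L0 : labeling V) (x y : T2) : open_adj adj L0 x y = open_adj adj L0 y x.
Proof. by rewrite /open_adj l2_adj_sym setUC. Qed.

Lemma U1 (h : {set V}) (v a b : T2) : rc_edge adj h v a -> rc_edge adj h v b ->
  L [set v; a] -> L [set v; b] -> a = b.
Proof.
move=> ra rb la lb; have [_ vv _ hv _] := rc_edgeP ra.
have gh := gedge_in vv hv.
have [y [z [ry rz lyz]]] : exists y z, [/\ rc_edge adj h v y, rc_edge adj h v z & L [set v; y] != L [set v; z]].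
  by apply: HL => //; rewrite /rc_vertex vv hv.
have yz : y != z by apply: contraNneq lyz => ->.
case: (rc_nb2 gh ry rz ra yz) => ?; case: (rc_nb2 gh ry rz rb yz) => ?;
 subst => //; by rewrite la lb in lyz.
Qed.

Lemma cls (v q : T2) : open_adj adj L v q -> exists k, k \in v /\ rc_edge adj k v q.
Proof.
case/andP => l _; have [_ _ _ _ [h [hv hq]]] := l2_adjP l.
by exists h; rewrite /rc_edge l hv hq.
Qed.

Lemma deg2 (v p n w : T2) : open_adj adj L v p -> open_adj adj L v n -> open_adj adj L v w ->
  p != n -> w = p \/ w = n.
Proof.
move=> op on ow pn.
have [kp [kpv rp]] := cls op; have [kn [knv rn]] := cls on; have [kw [kwv rw]] := cls ow.
have lp : L [set v; p] by case/andP: op.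
have ln : L [set v; n] by case/andP: on.
have lw : L [set v; w] by case/andP: ow.
have kpn : kp != kn by apply: contra_neq pn => e; by apply: (U1 rp _ lp ln); rewrite e.
case: (eqVneq kw kp) => [e|wp]; first by left; apply: (U1 rw _ lw lp); rewrite e.
case: (eqVneq kw kn) => [e|wn]; first by right; apply: (U1 rw _ lw ln); rewrite e.
exfalso.
have [_ vv _ _ _] := rc_edgeP rp.
have [f [g [_ vE]]] := llg_vertexP vv.
have sub : [set kp; kn; kw] \subset v.
  by apply/subsetP => x; rewrite !inE => /orP[/orP[]|]/eqP->.
have c3 : #|[set kp; kn; kw]| = 3 by apply: card3; rewrite // eq_sym.
have := subset_leq_card sub; rewrite c3 vE cards2.
by case: (f != g).
Qed.

Lemma deg_ge2 (v : T2) : llg_vertex adj v ->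
  exists p n, [/\ p != n, open_adj adj L v p & open_adj adj L v n].
Proof.
move=> vv; have [f [g [fg vE]]] := llg_vertexP vv.
have [gf gg fneg _] := lg_adjP fg.
have op : forall k, k \in v -> exists p, rc_edge adj k v p /\ L [set v; p].
  move=> k kv.
  have [y [z [ry rz lyz]]] : exists y z, [/\ rc_edge adj k v y, rc_edge adj k v z & L [set v; y] != L [set v; z]].
    by apply: HL; [apply: gedge_in kv | rewrite /rc_vertex vv kv].
  case Ly: (L [set v; y]); first by exists y.
  by exists z; split => //; move: lyz; rewrite Ly; case: (L _).
have fv : f \in v by rewrite vE set21.
have gv : g \in v by rewrite vE set22.
have [pf [rf lf]] := op f fv.
have [pg [rg lg]] := op g gv.
exists pf, pg; split; last first.
- by rewrite /open_adj lg andbT; case/and3P: rg.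
- by rewrite /open_adj lf andbT; case/and3P: rf.
apply/negP => /eqP e.
have [npf _ _ _ fpf] := rc_edgeP rf.
have [_ _ vpg _ gpg] := rc_edgeP rg.
rewrite -e in gpg vpg.
have [a [b [_ pE]]] := llg_vertexP vpg.
move: fpf gpg; rewrite pE => fi gi.
by move: npf; rewrite vE pE (set2_in fneg fi gi) eqxx.
Qed.

Lemma in_rc_edgeP (e : {set V}) (u v : T2) : in_rc_edge adj e [set u; v] = rc_edge adj e u v.
Proof.
apply/idP/idP.
- case/existsP => x /existsP [y /andP[r /eqP /set2_eqE [[-> ->]|[-> ->]]]] //.
  by rewrite rc_edge_sym.
- by move=> r; apply/existsP; exists u; apply/existsP; exists v; rewrite r eqxx.
Qed.

Lemma open_minus_sym (a b c d u v : T2) : open_minus adj L a b c d u v = open_minus adj L a b c d v u.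
Proof. by rewrite /open_minus open_adj_sym setUC. Qed.

Lemma deg1 (R : rel T2) (v p w w' : T2) : open_adj adj L v p ->
  (forall w, R v w -> open_adj adj L v w /\ w != p) -> R v w -> R v w' -> w = w'.
Proof.
move=> op H Rw Rw'; case: (eqVneq w w') => // ww.
have [ow wp] := H _ Rw; have [ow' wp'] := H _ Rw'.
by case: (deg2 ow ow' op ww) => e; [move: wp | move: wp']; rewrite e eqxx.
Qed.

Section Cfg.
Variable e : {set V}.
Hypothesis ge : gedge adj e.
Variables x1 x2 x3 x4 : T2.
Hypothesis C : rc_config adj L e x1 x2 x3 x4.

Lemma cfg_parts : [/\ (x1 != x2 /\ x1 != x3 /\ x1 != x4) /\ (x2 != x3 /\ x2 != x4 /\ x3 != x4),
  [/\ rc_edge adj e x1 x2, rc_edge adj e x2 x3, rc_edge adj e x3 x4 & rc_edge adj e x4 x1],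
  L [set x1; x2] /\ L [set x3; x4] & ~~ L [set x2; x3] /\ ~~ L [set x4; x1]].
Proof.
case: C => u rs /andP[l1 l2] /andP[l3 l4]; split => //.
by do !split; apply: contraTneq u => ->; rewrite /= !inE ?eqxx ?orbT //= ?andbF.
Qed.

Lemma cfg_cover (y : T2) : llg_vertex adj y -> e \in y -> [\/ y = x1, y = x2, y = x3 | y = x4].
Proof.
move=> vy ey; have [[[d12 [d13 d14]] [d23 [d24 d34]]] [r12 r23 r34 r41] _ _] := cfg_parts.
have [_ vx1 _ ex1 _] := rc_edgeP r12.
have [s [s' [E E' ss ss' S1]]] := sides ge vx1 ex1.
have S2 := other_side E r12 S1.
have S3 := other_side E' r23 S2.
have S4 := other_side E r34 S3.
case: (side_cover E vy ey) => Sy.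
- case: (eqVneq y x1) => [|n1]; first by constructor 1.
  case: (eqVneq y x3) => [|n3]; first by constructor 3.
  by case: (side_le2 E ss S1 S3 Sy d13); rewrite eq_sym.
- case: (eqVneq y x2) => [|n2]; first by constructor 2.
  case: (eqVneq y x4) => [|n4]; first by constructor 4.
  by case: (side_le2 E' ss' S2 S4 Sy d24); rewrite eq_sym.
Qed.

Lemma cfg_edges (u v : T2) : rc_edge adj e u v ->
  [\/ [set u; v] = [set x1; x2], [set u; v] = [set x2; x3],
      [set u; v] = [set x3; x4] | [set u; v] = [set x4; x1]].
Proof.
move=> ruv; have [[[d12 [d13 d14]] [d23 [d24 d34]]] [r12 r23 r34 r41] _ _] := cfg_parts.
have [_ vu _ eu _] := rc_edgeP ruv.
have r21 : rc_edge adj e x2 x1 by rewrite rc_edge_sym.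
have r32 : rc_edge adj e x3 x2 by rewrite rc_edge_sym.
have r43 : rc_edge adj e x4 x3 by rewrite rc_edge_sym.
have r14 : rc_edge adj e x1 x4 by rewrite rc_edge_sym.
case: (cfg_cover vu eu) => ?; subst u.
- case: (rc_nb2 ge r12 r14 ruv d24) => ->; [constructor 1 | constructor 4]; by rewrite // setUC.
- case: (rc_nb2 ge r21 r23 ruv d13) => ->; [constructor 1 | constructor 2]; by rewrite // setUC.
- case: (rc_nb2 ge r32 r34 ruv d24) => ->; [constructor 2 | constructor 3]; by rewrite // setUC.
- have d31 : x3 != x1 by rewrite eq_sym.
  case: (rc_nb2 ge r43 r41 ruv d31) => ->; [constructor 3 | constructor 4]; by rewrite // setUC.
Qed.

Lemma cfg_flip : rc_config adj (flip adj L e) e x2 x3 x4 x1.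
Proof.
have [_ [r12 r23 r34 r41] [l12 l34] [n23 n41]] := cfg_parts.
split.
- have u : uniq [:: x1; x2; x3; x4] by case: C.
  by change (uniq (rot 1 [:: x1; x2; x3; x4])); rewrite rot_uniq.
- by split.
- by rewrite /flip /= !in_rc_edgeP r23 r41 n23 n41.
- by rewrite /flip /= !in_rc_edgeP r34 r12 /= l12 l34.
Qed.

Definition Rm := open_minus adj L x1 x2 x3 x4.

Lemma cfg_minus (u v : T2) : open_minus adj (flip adj L e) x2 x3 x4 x1 u v = Rm u v.
Proof.
have [_ [r12 r23 r34 r41] [l12 l34] [n23 n41]] := cfg_parts.
rewrite /Rm /open_minus /open_adj /flip.
case: (boolP (in_rc_edge adj e [set u; v])) => H.
- rewrite in_rc_edgeP in H.
  case: (cfg_edges H) => ->;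
  by rewrite ?l12 ?l34 ?(negbTE n23) ?(negbTE n41) ?eqxx /= ?andbF.
- have ne : forall a b, rc_edge adj e a b -> [set u; v] != [set a; b].
    by move=> a b r; apply: contraNneq H => ->; rewrite in_rc_edgeP.
  by rewrite !ne.
Qed.

Lemma cfg_F (u v : T2) : open_adj adj (flip adj L e) u v ->
  [\/ Rm u v, [set u; v] = [set x2; x3] | [set u; v] = [set x4; x1]].
Proof.
move=> F; rewrite -cfg_minus /open_minus F /=.
case: (eqVneq [set u; v] [set x2; x3]) => [->|n1]; first by constructor 2.
case: (eqVneq [set u; v] [set x4; x1]) => [->|n2]; first by constructor 3.
by constructor 1.
Qed.


Lemma flipcl (a b : T2) : rc_edge adj e a b -> flip adj L e [set a; b] ->
  [set a; b] = [set x2; x3] \/ [set a; b] = [set x4; x1].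
Proof.
have [_ _ [l12 l34] [n23 n41]] := cfg_parts.
move=> r; rewrite /flip /= in_rc_edgeP r.
by case: (cfg_edges r) => ->; rewrite ?l12 ?l34 //; [left|right].
Qed.

Lemma cfg_partb : connect Rm x2 x3 -> forall a b c d,
  rc_edge adj e a b -> flip adj L e [set a; b] ->
  rc_edge adj e c d -> flip adj L e [set c; d] ->
  [set a; b] != [set c; d] -> ~~ connect (open_adj adj (flip adj L e)) a c.
Proof.
move=> c23 a b c d rab fab rcd fcd nabcd.
have [[[d12 [d13 d14]] [d23 [d24 d34]]] [r12 r23 r34 r41] [l12 l34] [n23 n41]] := cfg_parts.
have o12 : open_adj adj L x1 x2 by rewrite /open_adj l12 andbT; case/and3P: r12.
have o34 : open_adj adj L x3 x4 by rewrite /open_adj l34 andbT; case/and3P: r34.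
have RmE : forall u w, Rm u w -> [/\ open_adj adj L u w, [set u; w] != [set x1; x2] & [set u; w] != [set x3; x4]].
  by move=> u w /and3P.
have d1 : forall w w', Rm x1 w -> Rm x1 w' -> w = w'.
  by move=> w w'; apply: (deg1 o12) => w0 /RmE[o n _]; split => //; apply: contraNneq n => ->.
have d2 : forall w w', Rm x2 w -> Rm x2 w' -> w = w'.
  move=> w w'; apply: (deg1 (p:=x1)); first by rewrite open_adj_sym.
  by move=> w0 /RmE[o n _]; split => //; apply: contraNneq n => ->; rewrite setUC.
have d3 : forall w w', Rm x3 w -> Rm x3 w' -> w = w'.
  by move=> w w'; apply: (deg1 o34) => w0 /RmE[o _ n]; split => //; apply: contraNneq n => ->.
have d4 : forall w w', Rm x4 w -> Rm x4 w' -> w = w'.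
  move=> w w'; apply: (deg1 (p:=x3)); first by rewrite open_adj_sym.
  by move=> w0 /RmE[o _ n]; split => //; apply: contraNneq n => ->; rewrite setUC.
have Rsym : forall u v, Rm u v -> Rm v u by move=> u v; rewrite /Rm open_minus_sym.
have Rdeg2 : forall v p n w, Rm v p -> Rm v n -> Rm v w -> p != n -> w = p \/ w = n.
  by move=> v p n w /RmE[o1 _ _] /RmE[o2 _ _] /RmE[o3 _ _]; exact: deg2 o1 o2 o3.
case/connectP: c23 => p0 pth lst.
move: lst; case/shortenP: pth => q pq uq _ lst.
set S := x2 :: q.
have x3S : x3 \in S by rewrite lst /S mem_last.
have x2S : x2 \in S by rewrite /S inE eqxx.
have notS : forall z, z \in S -> z != x2 -> z != x3 ->
    (forall w w', Rm z w -> Rm z w' -> w = w') -> False.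
  move=> z; rewrite inE => /orP[/eqP->|zq]; first by rewrite eqxx.
  move=> _ z3 dz; have zl : z != last x2 q by rewrite -lst.
  have [p1 [n1 [pn r1 r2]]] := interior_two Rsym pq uq zq zl.
  by rewrite (dz _ _ r1 r2) eqxx in pn.
have x1S : x1 \notin S by apply/negP => h; apply: (notS x1 h d12 d13 d1).
have x4S : x4 \notin S.
  by apply/negP => h; apply: (notS x4 h _ _ d4); rewrite eq_sym.
have [y [q' qE]] : exists y q', q = y :: q'.
  case E: q => [|y q']; last by exists y, q'.
  by move: lst; rewrite E /= => lst; rewrite lst eqxx in d23.
have clR : forall z w, z \in S -> Rm z w -> w \in S.
  move=> z w zS Rzw.
  case: (eqVneq z x2) => [ez|nz2].
    subst z; move: (pq); rewrite qE /= => /andP[R2 _].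
    by rewrite (d2 _ _ Rzw R2) /S qE !inE eqxx orbT.
  case: (eqVneq z x3) => [ez|nz3].
    subst z.
    have qE' : q = rcons (belast y q') (last y q') by rewrite qE lastI.
    move: (pq) (lst); rewrite qE' rcons_path last_rcons => /andP[_ Rl] l3.
    rewrite -l3 in Rl; have := d3 _ _ Rzw (Rsym _ _ Rl) => ->.
    by move: (mem_last x2 (belast y q')); rewrite /S qE' !inE mem_rcons !inE => /orP[->|->]; rewrite ?orbT.
  have zq : z \in q by move: zS; rewrite inE (negbTE nz2).
  have zl : z != last x2 q by rewrite -lst.
  exact: (interior_closed Rsym Rdeg2 pq uq zq zl Rzw).
have clF1 : forall z w, z \in S -> open_adj adj (flip adj L e) z w -> w \in S.
  move=> z w zS F; case: (cfg_F F) => [R|E|E].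
  - exact: clR zS R.
  - have : w \in [set z; w] by rewrite set22.
    by rewrite E in_set2 => /orP[]/eqP->.
  - have : z \in [set z; w] by rewrite set21.
    rewrite E in_set2 => /orP[]/eqP ze; move: zS; by rewrite ze ?(negbTE x4S) ?(negbTE x1S).
have clF : closed (open_adj adj (flip adj L e)) [pred z | z \in S].
  move=> z w F /=; apply/idP/idP => h; first exact: clF1 h F.
  by apply: clF1 h _; rewrite open_adj_sym.
have inS : forall a b, [set a; b] = [set x2; x3] -> a \in S.
  move=> a' b' E; have : a' \in [set a'; b'] by rewrite set21.
  by rewrite E in_set2 => /orP[]/eqP->.
have ninS : forall a b, [set a; b] = [set x4; x1] -> a \notin S.
  move=> a' b' E; have : a' \in [set a'; b'] by rewrite set21.
  by rewrite E in_set2 => /orP[]/eqP->.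
apply/negP => /(closed_connect clF) /=.
case: (flipcl rab fab) => E1; case: (flipcl rcd fcd) => E2.
- by rewrite E1 E2 eqxx in nabcd.
- by rewrite (inS _ _ E1) (negbTE (ninS _ _ E2)).
- by rewrite (inS _ _ E2) (negbTE (ninS _ _ E1)).
- by rewrite E1 E2 eqxx in nabcd.
Qed.

End Cfg.


Lemma valid_side (e : {set V}) (s s' : V) (x a c : T2) : e = [set s; s'] -> e = [set s'; s] ->
  adj s s' -> side e s' x -> side e s a -> side e s c -> a != c ->
  [/\ rc_edge adj e x a, rc_edge adj e x c & L [set x; a] != L [set x; c]].
Proof.
move=> E E' ss Sx Sa Sc ac.
have [h [xE eh _]] := Sx.
have ge : gedge adj e by have [] := lg_adjP eh.
have vx : llg_vertex adj x.
  by rewrite xE; apply/existsP; exists e; apply/existsP; exists h; rewrite eh eqxx.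
have ex : e \in x by rewrite xE set21.
have rv : rc_vertex adj e x by rewrite /rc_vertex vx ex.
have [y [z [ry rz lyz]]] := HL ge rv.
have Sy := other_side E' ry Sx; have Sz := other_side E' rz Sx.
have inac : forall t, side e s t -> t = a \/ t = c.
  move=> t St; case: (eqVneq t a) => [|ta]; first by left.
  case: (eqVneq t c) => [|tc]; first by right.
  by exfalso; apply: (side_le2 E ss Sa Sc St ac); rewrite eq_sym.
have yz : y != z by apply: contraNneq lyz => ->.
move: ry rz lyz yz; case: (inac _ Sy) => ->; case: (inac _ Sz) => -> ry rz lyz yz; rewrite ?eqxx // in yz.
all: by split; rewrite // eq_sym.
Qed.

Lemma parta_core (e : {set V}) (ge : gedge adj e) (a b c d : T2) :
  rc_config adj L e a b c d -> ~~ connect (open_adj adj L) a c ->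
  ~~ connect (open_adj adj L) a d -> typeB adj (flip adj L e) e.
Proof.
move=> C nac nad.
have [[[d12 [d13 d14]] [d23 [d24 d34]]] [r12 r23 r34 r41] [l12 l34] [n23 n41]] := cfg_parts C.
set O := open_adj adj L.
have Osym : forall u v, O u v -> O v u by move=> u v; rewrite /O open_adj_sym.
have Oirr : forall u, ~~ O u u.
  by move=> u; apply/negP => /andP[/l2_adjP[_ _ ne _ _] _]; rewrite eqxx in ne.
have cs := sym_connect_sym (fun x y => open_adj_sym L x y).
have o12 : O a b by rewrite /O /open_adj l12 andbT; case/and3P: r12.
have o34 : O c d by rewrite /O /open_adj l34 andbT; case/and3P: r34.
have cyc : forall root u v, O u v -> connect O root u ->
    connect (fun x y => (O x y && connect O root x) && ([set x; y] != [set u; v])) v u.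
  move=> root u v ouv cu; apply: (cycle_edge (r := fun x y => O x y && connect O root x)).
  - move=> x y /andP[oxy cx]; by rewrite Osym //= (connect_trans cx (connect1 oxy)).
  - by move=> x p n w /andP[o1 _] /andP[o2 _] /andP[o3 _]; exact: deg2 o1 o2 o3.
  - by move=> x; rewrite (negbTE (Oirr x)).
  - move=> x w /andP[oxw cx]; case/andP: (oxw) => l _.
    have [vx _ _ _ _] := l2_adjP l.
    have [p [n [pn op on]]] := deg_ge2 vx.
    by exists p, n; split => //; apply/andP.
  - by rewrite ouv cu.
have cba : connect (open_minus adj L a b c d) b a.
  apply: connect_sub (cyc a a b o12 (connect0 _ _)) => u v /andP[/andP[ouv cu] ne].
  apply: connect1; rewrite /open_minus -/O ouv ne /=.
  by apply/negP => /eqP /set2_eqE [[ue _]|[ue _]]; [apply: (negP nac) | apply: (negP nad)]; rewrite -ue.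
have cdc : connect (open_minus adj L a b c d) d c.
  apply: connect_sub (cyc c c d o34 (connect0 _ _)) => u v /andP[/andP[ouv cu] ne].
  apply: connect1; rewrite /open_minus -/O ouv ne andbT /=.
  apply/negP => /eqP /set2_eqE [[ue _]|[ue _]]; apply: (negP nac); rewrite cs.
  + by rewrite -ue.
  + by apply: connect_trans (connect1 (Osym _ _ o12)); rewrite -ue.
have C' := cfg_flip C.
have Rs := sym_connect_sym (fun x y => open_minus_sym a b c d x y).
exists b, c, d, a; split => //.
- apply: (connect_trans (y := a)).
  + apply: connect_sub cba => u v R; apply: connect1.
    have R' : open_minus adj (flip adj L e) b c d a u v by rewrite (cfg_minus ge C); exact: R.
    by case/and3P: R'.
  + apply: connect1; rewrite /open_adj /flip /= in_rc_edgeP rc_edge_sym r41 setUC n41 andbT.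
    by case/and3P: r41; rewrite l2_adj_sym.
- by rewrite (eq_connect (cfg_minus ge C)) /Rm Rs.
- by rewrite (eq_connect (cfg_minus ge C)) /Rm Rs.
Qed.

Lemma parta (e : {set V}) (ge : gedge adj e) (a b c d : T2) :
  rc_edge adj e a b -> L [set a; b] -> rc_edge adj e c d -> L [set c; d] ->
  ~~ connect (open_adj adj L) a c -> typeB adj (flip adj L e) e.
Proof.
move=> rab lab rcd lcd nac.
set O := open_adj adj L.
have Osym : forall u v, O u v -> O v u by move=> u v; rewrite /O open_adj_sym.
have oab : O a b by rewrite /O /open_adj lab andbT; case/and3P: rab.
have ocd : O c d by rewrite /O /open_adj lcd andbT; case/and3P: rcd.
have nad : ~~ connect O a d.
  by apply: contra nac => h; apply: connect_trans h (connect1 (Osym _ _ ocd)).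
have [ab va _ ea _] := rc_edgeP rab.
have [cd vc _ ec _] := rc_edgeP rcd.
have ac : a != c by apply: contraNneq nac => ->; exact: connect0.
have ad : a != d by apply: contraNneq nad => ->; exact: connect0.
have bc : b != c by apply: contraNneq nac => <-; exact: connect1.
have bd : b != d by apply: contraNneq nad => <-; exact: connect1.
have [s [s' [E E' ss ss' Sa]]] := sides ge va ea.
have Sb := other_side E rab Sa.
have Lfl : forall x y z, L [set z; y] -> L [set z; x] != L [set z; y] -> L [set z; x] = false.
  by move=> x y z h; rewrite h; case: (L _).
case: (side_cover E vc ec) => Sc.
- have Sd := other_side E rcd Sc.
  have [rba rbc lb] := valid_side E E' ss Sb Sa Sc ac.
  have [rda rdc ld] := valid_side E E' ss Sd Sa Sc ac.
  have Lbc : L [set b; c] = false.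
    by move: lb; rewrite setUC lab; case: (L _).
  have Lda : L [set d; a] = false by apply: (Lfl a c d) => //; rewrite setUC.
  apply: (parta_core ge (a:=a) (b:=b) (c:=c) (d:=d)) nac nad.
  split.
  + by rewrite /= !inE !negb_or ab ac ad bc bd cd.
  + by split.
  + by rewrite lab lcd.
  + by rewrite Lbc Lda.
- have Sd := other_side E' rcd Sc.
  have [rba rbd lb] := valid_side E E' ss Sb Sa Sd ad.
  have [rca rcd' lc] := valid_side E E' ss Sc Sa Sd ad.
  have Lbd : L [set b; d] = false.
    by move: lb; rewrite setUC lab; case: (L _).
  have Lca : L [set c; a] = false.
    exact: (Lfl a d c lcd lc).
  apply: (parta_core ge (a:=a) (b:=b) (c:=d) (d:=c)) nad nac.
  split.
  + by rewrite /= !inE !negb_or ab ac ad bc bd eq_sym cd.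
  + by split => //; rewrite rc_edge_sym.
  + by rewrite lab setUC lcd.
  + by rewrite Lbd Lca.
Qed.

Lemma partb (e : {set V}) (ge : gedge adj e) : typeB adj L e ->
    forall a b c d : T2,
      rc_edge adj e a b -> flip adj L e [set a; b] ->
      rc_edge adj e c d -> flip adj L e [set c; d] ->
      [set a; b] != [set c; d] ->
      ~~ connect (open_adj adj (flip adj L e)) a c.
Proof. move=> [x1 [x2 [x3 [x4 [C _ c23 _]]]]]; exact: (cfg_partb ge C (c23 : connect (Rm x1 x2 x3 x4) x2 x3)). Qed.

Lemma partc (e : {set V}) (ge : gedge adj e) : typeA adj L e -> typeA adj (flip adj L e) e.
Proof.
move=> [x1 [x2 [x3 [x4 [C _ c13 c24]]]]].
have Rs := sym_connect_sym (fun x y => open_minus_sym x1 x2 x3 x4 x y).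
exists x2, x3, x4, x1; split.
- exact: cfg_flip C.
- have c24' : connect (open_minus adj (flip adj L e) x2 x3 x4 x1) x2 x4.
    by rewrite (eq_connect (cfg_minus ge C)).
  by apply: connect_sub c24' => u v R; apply: connect1; case/and3P: R.
- by rewrite (eq_connect (cfg_minus ge C)).
- by rewrite (eq_connect (cfg_minus ge C)) /Rm Rs.
Qed.

End G.

Theorem lemma2p15 (V : finType) (adj : rel V)
  (Hsimple : simple_graph adj) (Hcubic : cubic adj)
  (Hconn : connected_graph adj) (Hbridge : bridgeless adj)
  (Htri : triangle_free adj)
  (L : labeling V) (HL : valid adj L)
  (e : {set V}) (He : gedge adj e) :
  (* (a) *)
  ((exists a b c d : {set {set V}},
      [/\ rc_edge adj e a b, L [set a; b], rc_edge adj e c d, L [set c; d]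
        & ~~ connect (open_adj adj L) a c]) ->
    typeB adj (flip adj L e) e)
  /\
  (* (b) *)
  (typeB adj L e ->
    forall a b c d : {set {set V}},
      rc_edge adj e a b -> flip adj L e [set a; b] ->
      rc_edge adj e c d -> flip adj L e [set c; d] ->
      [set a; b] != [set c; d] ->
      ~~ connect (open_adj adj (flip adj L e)) a c)
  /\
  (* (c) *)
  (typeA adj L e -> typeA adj (flip adj L e) e).
Proof.
have [Hsym _] := Hsimple.
split; [|split].
- by move=> [a [b [c [d [rab lab rcd lcd nac]]]]]; exact: (parta Hsym Hcubic HL He rab lab rcd lcd nac).
- exact: (partb Hsym Hcubic HL He).
- exact: (partc Hsym Hcubic He).
Qed.
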